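(* For a finite group $G$, $G=\tilde{\mathrm{F}}(G)$ if and only if the intersection of all maximal normal subgroups of $G$ coincides with $\Phi(G)$.
   Context: $\tilde{\mathrm{F}}(G)$ is defined by $\Phi(G)\subseteq\tilde{\mathrm{F}}(G)$ and $\tilde{\mathrm{F}}(G)/\Phi(G)=\mathrm{Soc}(G/\Phi(G))$, where $\Phi$ is the Frattini subgroup and $\mathrm{Soc}$ the socle. Maximal normal subgroups are proper. *)

(* Defs.v *)
From mathcomp Require Import all_boot all_fingroup all_solvable.
Set Implicit Arguments. Unset Strict Implicit. Unset Printing Implicit Defensive.
Local Open Scope group_scope.

Definition socle (gT : finGroupType) (G : {set gT}) : {set gT} :=
  <<\bigcup_(M : {group gT} | minnormal M G && (M \subset G)) M>>.

(* Generalized Fitting-type subgroup F~(G): the full preimage in G of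
   Soc(G / Phi(G)) under the quotient map, so Phi(G) <= F~(G) and
   F~(G)/Phi(G) = Soc(G/Phi(G)). *)
Definition Ftilde (gT : finGroupType) (G : {group gT}) : {set gT} :=
  coset 'Phi(G) @*^-1 socle (G / 'Phi(G)).

(* Intersection of all maximal normal subgroups (proper) of G, taken inside G
   (so it equals G when there are none, i.e. G = 1). *)
Definition maxnormal_core (gT : finGroupType) (G : {group gT}) : {set gT} :=
  G :&: \bigcap_(M : {group gT} | maxnormal M G G) M.

(* Main.v *)
Require Import Defs.
From mathcomp Require Import all_boot all_fingroup all_solvable.
Local Open Scope group_scope.

Module Helpers.
Set Implicit Arguments. Unset Strict Implicit. Unset Printing Implicit Defensive.

Section Basic.
Variable gT : finGroupType.
Implicit Types H G M N K L : {group gT}.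

Lemma socle_sub H : socle H \subset H.
Proof. by rewrite /socle gen_subG; apply/bigcupsP => M /andP[_ ->]. Qed.

Lemma socle_norm H : H \subset 'N(socle H).
Proof.
rewrite /socle norms_gen // norms_bigcup //; apply/bigcapsP => M /andP[].
by case/mingroupP=> /andP[_ nMH] _.
Qed.

Lemma minnormal_socle H N : minnormal N H -> N \subset H -> N \subset socle H.
Proof.
move=> mN sNH; rewrite /socle; apply: subset_trans (sub_gen _); last exact: subxx.
by apply: (bigcup_sup N); rewrite mN sNH.
Qed.

Lemma socle_subG H L :
  (forall N, minnormal N H -> N \subset H -> N \subset L) -> socle H \subset L.
Proof. by move=> hN; rewrite /socle gen_subG; apply/bigcupsP => M /andP[]; apply: hN. Qed.

Lemma mncP H x :
  reflect (x \in H /\ forall M : {group gT}, maxnormal M H H -> x \in M)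
          (x \in maxnormal_core H).
Proof.
rewrite /maxnormal_core inE; apply: (iffP andP) => [[xH /bigcapP xM] | [xH xM]].
  by split.
by split=> //; apply/bigcapP.
Qed.

Lemma maxnormal_Phi G M : maxnormal M G G -> 'Phi(G) \subset M.
Proof.
move=> mM; have nsMG := maxnormal_normal mM.
have nsPG := Phi_normal G.
have nsJ : M <*> 'Phi(G) <| G by apply: normalY.
have [eqJ | neJ] := eqVneq (M <*> 'Phi(G)) G.
  have : <<(M : {set gT})>> = G by apply: Phi_nongen; rewrite joingC.
  rewrite genGid => eMG; have := maxnormal_proper mM.
  by rewrite eMG properE subxx.
case/maxgroupP: mM => _ maxM.
have -> : (M : {set gT}) = M <*> 'Phi(G).
  apply/esym/(maxM (M <*> 'Phi(G))%G); last exact: joing_subl.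
  by case/andP: nsJ => sJ nJ; rewrite /= properEneq neJ sJ nJ.
exact: joing_subr.
Qed.

End Basic.


Section Quo.
Variable gT : finGroupType.
Variables G P : {group gT}.
Hypothesis nsPG : P <| G.
Implicit Types M K : {group gT}.

Lemma max_quo M : maxnormal M G G -> P \subset M -> maxnormal (M / P) (G / P) (G / P).
Proof.
move=> mM sPM; have nsMG := maxnormal_normal mM.
have nsPM : P <| M := normalS sPM (normal_sub nsMG) nsPG.
have nPG := normal_norm nsPG.
apply/maxgroupP; split.
  rewrite quotient_proper ?maxnormal_proper //.
  by rewrite quotient_norms ?normal_norm // andbT (maxnormal_proper mM).
move=> Kb /andP[pK nK] sMK.
have [K defK sPK sKG] := inv_quotientS nsPG (proper_sub pK).
have nsPK : P <| K := normalS sPK sKG nsPG.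
have nKG : G \subset 'N(K).
  by rewrite -(quotientGK nsPK) norm_quotient_pre // -defK.
case/maxgroupP: mM => _ maxM.
rewrite defK (maxM K) //.
  by rewrite -(quotient_proper nsPK nsPG) -defK pK.
by rewrite -(quotientSGK _ sPK) -?defK // (subset_trans (normal_sub nsMG)).
Qed.

Lemma max_pre M : maxnormal (M / P) (G / P) (G / P) -> P \subset M -> M \subset G ->
  maxnormal M G G.
Proof.
move=> mM sPM sMG.
have nsPM : P <| M := normalS sPM sMG nsPG.
have nPG := normal_norm nsPG.
case/maxgroupP: mM => /andP[pM nM] maxM.
apply/maxgroupP; split.
  rewrite -(quotient_proper nsPM nsPG) pM /=.
  by rewrite -(quotientGK nsPM) norm_quotient_pre.
move=> K /andP[pK nK] sMK.
have sPK := subset_trans sPM sMK.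
have nsPK : P <| K := normalS sPK (proper_sub pK) nsPG.
apply: (quotient_inj nsPK nsPM).
apply: (maxM (K / P)%G).
  by rewrite /= (quotient_proper nsPK nsPG) pK quotient_norms.
by rewrite quotientS.
Qed.

End Quo.


Lemma core_quo (gT : finGroupType) (G : {group gT}) :
  (maxnormal_core (G / 'Phi(G))%G :==: 1) = (maxnormal_core G :==: 'Phi(G)).
Proof.
set P := 'Phi(G).
have nsPG : P <| G := Phi_normal G.
have nPG := normal_norm nsPG.
apply/idP/idP => /eqP hR.
  rewrite eqEsubset; apply/andP; split; last first.
    apply/subsetP => x Px; apply/mncP; split; first exact: (subsetP (Phi_sub G)).
    by move=> M mM; apply: (subsetP (maxnormal_Phi mM)).
  apply/subsetP => x /mncP [xG xM].
  have xN : x \in 'N(P) := subsetP nPG x xG.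
  apply: coset_idr => //.
  suff : coset P x \in maxnormal_core (G / P)%G by rewrite hR => /set1P.
  apply/mncP; split; first exact: mem_quotient.
  move=> Mb mMb.
  have [M defM sPM sMG] := inv_quotientS nsPG (maxnormal_sub mMb).
  rewrite defM mem_quotient // xM //.
  by apply: (max_pre nsPG) => //; rewrite -defM.
rewrite eqEsubset; apply/andP; split; last first.
  by rewrite sub1set; apply/mncP; split=> [|M _]; apply: group1.
apply/subsetP => xb /mncP [xbG xbM].
case/morphimP: xbG => x xN xG def_xb; subst xb.
apply/set1P; apply: coset_id.
suff : x \in maxnormal_core G by rewrite hR.
apply/mncP; split=> // M mM.
have sPM := maxnormal_Phi mM.
have nsPM : P <| M := normalS sPM (maxnormal_sub mM) nsPG.
rewrite -(quotientGK nsPM); apply: mem_morphpre => //.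
exact: (xbM (M / P)%G (max_quo nsPG mM sPM)).
Qed.


Section Soc.
Variable gT : finGroupType.
Implicit Types H M N K L X : {group gT}.

Lemma maxnormal_mul H M X :
  maxnormal M H H -> H \subset 'N(X) -> X \subset H -> ~~ (X \subset M) -> X * M = H.
Proof.
move=> mM nXH sXH nsXM.
have nsMH := maxnormal_normal mM.
have sMH := normal_sub nsMH.
have eJ : X <*> M = X * M by rewrite norm_joinEr // (subset_trans sMH).
rewrite -eJ; apply/eqP; rewrite eqEproper join_subG sXH sMH /=.
apply/negP => pJ; suff : X \subset M by rewrite (negbTE nsXM).
case/maxgroupP: mM => _ maxM.
rewrite -(maxM (X <*> M)%G) ?joing_subl ?joing_subr //.
by rewrite /= pJ normsY // normal_norm.
Qed.

Lemma capP H (A : {set {group gT}}) x :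
  reflect (x \in H /\ forall M, M \in A -> x \in M)
          (x \in H :&: \bigcap_(M in A) gval M).
Proof.
rewrite inE; apply: (iffP andP) => [[xH /bigcapP xM] | [xH xM]].
  by split.
by split=> //; apply/bigcapP.
Qed.

Lemma cap_norm H (A : {set {group gT}}) :
  (forall M, M \in A -> H \subset 'N(M)) ->
  H \subset 'N(H :&: \bigcap_(M in A) gval M).
Proof.
move=> nA; rewrite normsI ?normG // norms_bigcap //.
by apply/bigcapsP => M /nA.
Qed.


Lemma minnormal_ntriv N H : minnormal N H -> N :!=: 1.
Proof. by case/mingroupP => /andP[]. Qed.

Lemma minnormal_norm N H : minnormal N H -> H \subset 'N(N).
Proof. by case/mingroupP => /andP[]. Qed.

Lemma minnormal_capTI N H L : minnormal N H -> H \subset 'N(L) -> ~~ (N \subset L) ->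
  N :&: L \subset [1 gT].
Proof.
move=> mN nLH nNL; case/mingroupP: (mN) => /andP[_ nNH] minN.
apply/negPn/negP => ntI.
have eI : (N :&: L)%G :=: N.
  apply: minN; last exact: subsetIl.
  rewrite /= normsI // andbT; apply: contra ntI => /eqP ->; exact: subxx.
by move: nNL; rewrite -eI subsetIr.
Qed.

Lemma socle_maxnormal H N : socle H = H -> minnormal N H -> N \subset H ->
  exists K : {group gT}, maxnormal K H H /\ ~~ (N \subset K).
Proof.
move=> sH mN sNH.
pose gP := fun K : {group gT} => (K <| H) && ~~ (N \subset K).
have [K maxK] : {K : {group gT} | maxgroup K gP}.
  apply: ex_maxgroup; exists 1%G; rewrite /gP normal1 /= subG1.
  exact: minnormal_ntriv mN.
case/maxgroupP: (maxK) => /andP[nsKH nNK] maxK'.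
exists K; split=> //.
apply/maxgroupP; split.
  rewrite normal_norm // andbT properEneq normal_sub // andbT.
  by apply: contra nNK => /eqP ->.
move=> L /andP[pL nLH] sKL.
have [sNL | nNL] := boolP (N \subset L); last first.
  by apply: maxK' => //; rewrite /gP /normal proper_sub // nLH nNL.
exfalso.
case: (pickP [pred N' : {group gT} | minnormal N' H && (N' \subset H) && ~~ (N' \subset L)]).
  move=> N' /= /andP[/andP[mN' sN'H] nN'L].
  have tI := minnormal_capTI mN' nLH nN'L.
  have nsN'H : N' <| H by rewrite /normal sN'H (minnormal_norm mN').
  have nsJ : (K <*> N')%G <| H by apply: normalY.
  have eJ : K <*> N' = K * N'.
    by rewrite norm_joinEr // (subset_trans sN'H) ?normal_norm.
  have sNK : ~~ (N \subset K <*> N').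
    apply/negP => sNJ; move/negP: nNK; apply; apply/subsetP => n Nn.
    have := subsetP sNJ n Nn; rewrite eJ => /mulsgP [k n' Kk N'n' def_n].
    have n'1 : n' = 1.
      apply/set1P; apply: (subsetP tI); rewrite inE N'n' /=.
      have -> : n' = k^-1 * n by rewrite def_n mulKg.
      by rewrite groupM ?groupV // ?(subsetP sKL k Kk) ?(subsetP sNL n Nn).
    by rewrite def_n n'1 mulg1.
  have eK : (K <*> N')%G :=: K by apply: maxK' ; [rewrite /gP nsJ sNK | exact: joing_subl].
  move/negP: nN'L; apply; apply: subset_trans sKL.
  by rewrite -eK joing_subr.
move=> none; move: pL; rewrite properE => /andP[_]; apply/negP/negPn.
rewrite -{1}sH; apply: socle_subG => N0 mN0 sN0H.
by have := none N0; rewrite /= mN0 sN0H /= => /negbFE.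
Qed.

End Soc.


Section SocB.
Variable gT : finGroupType.
Implicit Types H M N K L X : {group gT}.

Lemma core1_socle H : maxnormal_core H \subset [1 gT] -> H \subset socle H.
Proof.
move=> hR.
pose MN := [set M : {group gT} | maxnormal M H H].
pose Pp := fun F : {set {group gT}} =>
  (F \subset MN) && (H :&: \bigcap_(M in F) gval M \subset [1 gT]).
have [F minF] : {F | minset Pp F}.
  apply: ex_minset; exists MN; rewrite /Pp subxx /=.
  apply/subsetP => x /capP [xH xM]; apply: (subsetP hR); apply/mncP; split=> //.
  by move=> M mM; apply: xM; rewrite inE.
case/minsetP: minF => /andP[sFMN capF] minF.
have mF : forall M, M \in F -> maxnormal M H H.
  by move=> M /(subsetP sFMN); rewrite inE.
pose NM := fun M : {group gT} => (H :&: \bigcap_(M' in F :\ M) gval M')%G.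
have NM_norm : forall M, H \subset 'N(NM M).
  move=> M; apply: cap_norm => M' /setD1P [_ /mF /maxnormal_normal /normal_norm] //.
have NM_sub : forall M, NM M \subset H by move=> M; exact: subsetIl.
have NM_cap : forall M, M \in F -> NM M :&: M \subset [1 gT].
  move=> M MF; apply: subset_trans capF; apply/subsetP => x /setIP [/capP [xH xM] xM0].
  apply/capP; split=> // M' M'F.
  by have [-> // | neM] := eqVneq M' M; apply: xM; rewrite !inE neM.
have NM_nt : forall M, M \in F -> NM M :!=: 1.
  move=> M MF; apply/negP => /eqP e1.
  have : Pp (F :\ M) by rewrite /Pp (subset_trans (subD1set F M)) //= -/(gval (NM M)) e1.
  move/minF => /(_ (subD1set F M)) eF.
  by move: MF; rewrite -eF !inE eqxx.
have NM_nsub : forall M, M \in F -> ~~ (NM M \subset M).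
  move=> M MF; apply/negP => sNM; move/negP: (NM_nt M MF); apply.
  rewrite -subG1; apply: subset_trans (NM_cap M MF).
  by rewrite subsetI subxx sNM.
have NM_mul : forall M, M \in F -> NM M * M = H.
  by move=> M MF; apply: maxnormal_mul; rewrite ?mF ?NM_norm ?NM_sub ?NM_nsub.
have NM_soc : forall M, M \in F -> NM M \subset socle H.
  move=> M MF.
  have [L mL sLN] := minnormal_exists (NM_nt M MF) (NM_norm M).
  have sLH := subset_trans sLN (NM_sub M).
  apply: subset_trans (minnormal_socle mL sLH).
  have nsLM : ~~ (L \subset M).
    apply/negP => sLM; move/negP: (minnormal_ntriv mL); apply.
    rewrite -subG1; apply: subset_trans (NM_cap M MF).
    by rewrite subsetI sLN sLM.
  have eLM := maxnormal_mul (mF M MF) (minnormal_norm mL) sLH nsLM.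
  apply/subsetP => n Nn.
  have := NM_sub M; move/subsetP/(_ n Nn); rewrite -eLM => /mulsgP [l m Ll Mm def_n].
  have m1 : m = 1.
    apply/set1P; apply: (subsetP (NM_cap M MF)); rewrite inE Mm andbT.
    have -> : m = l^-1 * n by rewrite def_n mulKg.
    by rewrite groupM ?groupV // (subsetP sLN).
  by rewrite def_n m1 mulg1.
have key : forall n (A : {set {group gT}}), A \subset F -> #|A| = n ->
    H \subset socle H * (H :&: \bigcap_(M in A) gval M).
  elim=> [|n IH] A sAF cA.
    move/cards0_eq: cA => ->; apply/subsetP => h Hh.
    rewrite -[h]mul1g; apply: mem_mulg; first exact: group1.
    by apply/capP; split=> // M; rewrite inE.
  have /set0Pn [M MA] : A != set0 by rewrite -card_gt0 cA.
  have MF := subsetP sAF M MA.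
  have sA'F : A :\ M \subset F := subset_trans (subD1set A M) sAF.
  have cA' : #|A :\ M| = n by move: cA; rewrite (cardsD1 M A) MA add1n => -[].
  have IH' := IH _ sA'F cA'.
  apply/subsetP => h Hh; have := subsetP IH' h Hh.
  case/mulsgP => s k' Ss /capP [k'H k'M] ->.
  have : k' \in NM M * M by rewrite NM_mul.
  case/mulsgP => n0 m Nn0 Mm def_k'.
  have [n0H n0M] : n0 \in H /\ forall M', M' \in F :\ M -> n0 \in M'.
    exact/capP.
  have mH : m \in H by rewrite (subsetP (maxnormal_sub (mF M MF))).
  have def_m : m = n0^-1 * k' by rewrite def_k' mulKg.
  rewrite def_k' mulgA; apply: mem_mulg.
    rewrite groupM //; exact: (subsetP (NM_soc M MF)).
  apply/capP; split=> // M' M'A.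
  have [-> // | neM] := eqVneq M' M.
  have M'A' : M' \in A :\ M by rewrite !inE neM.
  rewrite def_m groupM ?groupV ?k'M //; apply: n0M.
  by rewrite !inE neM (subsetP sAF).
apply/subsetP => h Hh.
have := subsetP (key _ F (subxx F) erefl) h Hh.
case/mulsgP => s c Ss Cc ->.
by have := subsetP capF c Cc; move/set1P => ->; rewrite mulg1.
Qed.

End SocB.


Lemma socle_core (gT : finGroupType) (H : {group gT}) :
  (socle H :==: H) = (maxnormal_core H :==: 1).
Proof.
have one_core : [1 gT] \subset maxnormal_core H.
  by rewrite sub1set; apply/mncP; split=> [|M _]; apply: group1.
apply/idP/idP => /eqP hS.
  rewrite eqEsubset one_core andbT.
  pose R := (H :&: \bigcap_(M : {group gT} | maxnormal M H H) gval M)%G.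
  have nRH : H \subset 'N(R).
    rewrite normsI ?normG // norms_bigcap //.
    by apply/bigcapsP => M /maxnormal_normal /normal_norm.
  apply/negPn/negP => ntR.
  have ntR' : R :!=: 1.
    apply/negP => /eqP e; apply: (negP ntR); apply/subsetP => x xR.
    by have : x \in R := xR; rewrite e.
  have [N mN sNR] := minnormal_exists ntR' nRH.
  have sNH : N \subset H := subset_trans sNR (subsetIl _ _).
  have [K [mK nNK]] := socle_maxnormal hS mN sNH.
  move/negP: nNK; apply; apply/subsetP => x /(subsetP sNR) xR.
  by case/mncP: xR => _; apply.
rewrite eqEsubset socle_sub core1_socle //.
by rewrite hS.
Qed.

Lemma ftilde_eq (gT : finGroupType) (G : {group gT}) :
  (G :==: Ftilde G) = (socle (G / 'Phi(G)) :==: G / 'Phi(G)).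
Proof.
have nsPG := Phi_normal G.
apply/idP/idP => /eqP hE.
  have e : coset 'Phi(G) @* (Ftilde G) = socle (G / 'Phi(G)).
    by rewrite /Ftilde morphpreK // sub_im_coset.
  by apply/eqP; rewrite -e -hE.
by rewrite /Ftilde hE quotientGK.
Qed.

End Helpers.
Import Helpers.

Theorem theorem4 (gT : finGroupType) (G : {group gT}) :
  (G :==: Ftilde G) = (maxnormal_core G :==: 'Phi(G)).
Proof. by rewrite ftilde_eq -core_quo -socle_core. Qed.
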